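(* Let $\tau>0$, $x_t\in\mathbb{R}^n$, let $i_t$ be an index, and let $x_{t+1}=\operatorname{prox}_{\tau g}(x_t-\tau\nabla f_{i_t}(x_t))$. Then for every $z\in\mathbb{R}^n$ and every $\epsilon>0$, \begin{align*} \|x_{t+1}-z\|^2-\|x_t-z\|^2&\le 2\tau[f_{i_t}(z)-f_{i_t}(x_t)]+2\tau\bigl(g(z)-g(x_{t+1})\bigr)+\frac{\tau}{\epsilon}\|\nabla f_{i_t}(x_t)-\nabla f(x_t)\|^2\\ &\quad+2\tau[f(x_t)-f(x_{t+1})]+[\tau\epsilon+\tau L-1]\|x_t-x_{t+1}\|^2. \end{align*}
   Context: Let $D$ be a probability distribution on an index set, and for each index $i$ let $f_i:\mathbb{R}^n\to\mathbb{R}$ be convex and $L$-smooth (differentiable with $L$-Lipschitz gradient, $L>0$); let $f(x)=\mathbb{E}_{i\sim D}[f_i(x)]$ with $\mathbb{E}_{i\sim D}[\nabla f_i(x)]=\nabla f(x)$. Let $g:\mathbb{R}^n\to\mathbb{R}\cup\{+\infty\}$ be proper, convex and lower semicontinuous. $\operatorname{prox}_{\tau g}(y)=\arg\min_u\{\tau g(u)+\tfrac12\|y-u\|^2\}$. *)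

(* Defs.v *)
From HB Require Import structures.
From mathcomp Require Import all_boot all_order all_algebra.
From mathcomp Require Import all_classical all_reals all_analysis.
Set Implicit Arguments. Unset Strict Implicit. Unset Printing Implicit Defensive.
Import Order.TTheory GRing.Theory Num.Theory.
Import numFieldNormedType.Exports.
Local Open Scope classical_set_scope.
Local Open Scope ring_scope.

Definition dotv {R : realType} {n : nat} (u v : 'rV[R]_n) : R :=
  \sum_(j < n) u ord0 j * v ord0 j.
Definition sqnorm {R : realType} {n : nat} (v : 'rV[R]_n) : R := dotv v v.
Definition enorm {R : realType} {n : nat} (v : 'rV[R]_n) : R :=
  Num.sqrt (sqnorm v).

Definition is_gradient {R : realType} {n : nat}
  (f : 'rV[R]_n -> R^o) (gradf : 'rV[R]_n -> 'rV[R]_n) : Prop :=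
  forall x, differentiable f x /\ forall h, 'd f x h = dotv (gradf x) h.

Definition convex_fun {R : realType} {n : nat} (f : 'rV[R]_n -> R) : Prop :=
  forall (x y : 'rV[R]_n) (t : R), 0 <= t -> t <= 1 ->
    f (t *: x + (1 - t) *: y) <= t * f x + (1 - t) * f y.

Definition L_smooth {R : realType} {n : nat} (L : R)
  (f : 'rV[R]_n -> R^o) (gradf : 'rV[R]_n -> 'rV[R]_n) : Prop :=
  is_gradient f gradf /\
  forall x y, enorm (gradf x - gradf y) <= L * enorm (x - y).

(* Extended-real-valued g : R^n -> R U {+oo}. *)
Definition proper_fun {R : realType} {n : nat} (g : 'rV[R]_n -> \bar R) : Prop :=
  (forall x, g x != -oo%E) /\ (exists x, g x \is a fin_num).

Definition convex_efun {R : realType} {n : nat} (g : 'rV[R]_n -> \bar R) : Prop :=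
  forall (x y : 'rV[R]_n) (t : R), 0 < t -> t < 1 ->
    (g (t *: x + (1 - t) *: y)%R <= t%:E * g x + (1 - t)%:E * g y)%E.

Definition lsc {R : realType} {n : nat} (g : 'rV[R]_n -> \bar R) : Prop :=
  forall x (a : \bar R), (a < g x)%E -> \forall y \near x, (a < g y)%E.

Definition is_prox {R : realType} {n : nat} (tau : R) (g : 'rV[R]_n -> \bar R)
  (y p : 'rV[R]_n) : Prop :=
  forall u, (tau%:E * g p + (sqnorm (y - p)%R / 2)%:E <=
             tau%:E * g u + (sqnorm (y - u)%R / 2)%:E)%E.

Definition vexpect {R : realType} {d} {I : measurableType d}
  (D : probability I R) {n : nat} (G : I -> 'rV[R]_n) : 'rV[R]_n :=
  \row_(j < n) Rintegral D setT (fun i => G i ord0 j).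

(* Main.v *)
Require Import Defs.
From HB Require Import structures.
From mathcomp Require Import all_boot all_order all_algebra.
From mathcomp Require Import all_classical all_reals all_analysis.
From mathcomp Require Import ring lra.
Import Order.TTheory GRing.Theory Num.Theory.
Import numFieldNormedType.Exports.
Local Open Scope classical_set_scope.
Local Open Scope ring_scope.

Section S.
Variables (R : realType) (n : nat).
Implicit Types (u v w : 'rV[R]_n).

Lemma dotvC u v : dotv u v = dotv v u.
Proof. by apply: eq_bigr => j _; rewrite mulrC. Qed.
Lemma dotvDl u w v : dotv (u + w) v = dotv u v + dotv w v.
Proof. by rewrite /dotv -big_split; apply: eq_bigr => j _; rewrite !mxE mulrDl. Qed.
Lemma dotvNl u v : dotv (- u) v = - dotv u v.
Proof. by rewrite /dotv -sumrN; apply: eq_bigr => j _; rewrite !mxE mulNr. Qed.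
Lemma dotvZl (a : R) u v : dotv (a *: u) v = a * dotv u v.
Proof. by rewrite /dotv mulr_sumr; apply: eq_bigr => j _; rewrite !mxE mulrA. Qed.
Lemma dotvBl u w v : dotv (u - w) v = dotv u v - dotv w v.
Proof. by rewrite dotvDl dotvNl. Qed.
Lemma dotvDr u w v : dotv v (u + w) = dotv v u + dotv v w.
Proof. by rewrite dotvC dotvDl !(dotvC v). Qed.
Lemma dotvNr u v : dotv v (- u) = - dotv v u.
Proof. by rewrite dotvC dotvNl dotvC. Qed.
Lemma dotvBr u w v : dotv v (u - w) = dotv v u - dotv v w.
Proof. by rewrite dotvDr dotvNr. Qed.
Lemma dotvZr (a : R) u v : dotv v (a *: u) = a * dotv v u.
Proof. by rewrite dotvC dotvZl dotvC. Qed.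
Lemma sqnorm_ge0 u : 0 <= sqnorm u.
Proof. by apply: sumr_ge0 => j _; rewrite -expr2 sqr_ge0. Qed.

Definition dotvE := (dotvDl, dotvBl, dotvNl, dotvZl, dotvDr, dotvBr, dotvNr, dotvZr).

Lemma young u v (lam : R) : 0 < lam ->
  2 * dotv u v <= lam * sqnorm u + sqnorm v / lam.
Proof.
move=> hl.
have h0 := sqnorm_ge0 (lam *: u - v).
rewrite /sqnorm !dotvE (dotvC v u) in h0.
rewrite /sqnorm.
have -> : lam * dotv u u + dotv v v / lam = (lam * (lam * dotv u u) + dotv v v) / lam.
  by field; rewrite gt_eqF.
rewrite ler_pdivlMr //. lra.
Qed.

Lemma ipbound (L c : R) u d : 0 < L -> 0 < c ->
  sqnorm u <= (L * c) ^+ 2 * sqnorm d -> `|dotv u d| <= L * c * sqnorm d.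
Proof.
move=> hL hc hu.
have hLc : 0 < L * c by rewrite mulr_gt0.
have hi : 0 < (L * c)^-1 by rewrite invr_gt0.
have y1 := @young u d _ hi.
have y2 := @young (- u) d _ hi.
have hN : sqnorm (- u) = sqnorm u by rewrite /sqnorm dotvNl dotvNr opprK.
rewrite dotvNl hN in y2.
rewrite invrK in y1 y2.
have : (L * c)^-1 * sqnorm u <= L * c * sqnorm d.
  rewrite ler_pdivrMl // mulrA -expr2 //.
move=> h; rewrite ler_norml; apply/andP; split; lra.
Qed.

Lemma lip_sq (L : R) u v : 0 < L -> enorm u <= L * enorm v -> sqnorm u <= L ^+ 2 * sqnorm v.
Proof.
move=> hL h.
have h0 : 0 <= enorm u by apply: sqrtr_ge0.
have h1 : 0 <= L * enorm v by apply: mulr_ge0; [exact: ltW | exact: sqrtr_ge0].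
move: h; rewrite -(@ler_pXn2r _ 2) ?inE ?h0 ?h1 // exprMn /enorm !sqr_sqrtr //; exact: sqnorm_ge0.
Qed.
Lemma phi_derive (f : 'rV[R]_n -> R^o) G (hg : is_gradient f G) (x d : 'rV[R]_n) (t : R) :
  is_derive t 1 (fun s : R => f (x + s *: d)) (dotv (G (x + t *: d)) d).
Proof.
pose h := (cst x + ( *:%R ^~ d)) : R -> 'rV[R]_n.
have ih : is_diff t h (0 + ( *:%R ^~ d)) := is_diffD (is_diff_cst x t) (is_diff_scalel t d).
have dh : differentiable h t := @ex_diff _ _ _ _ _ _ _ ih.
have dhv : 'd h t 1 = d.
  by rewrite (@diff_val _ _ _ _ _ _ _ ih) /= add0r scale1r.
have dft : differentiable f (h t) by exact: (hg _).1.
have dphi : differentiable (f \o h) t by apply: differentiable_comp.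
have := derivableP (@diff_derivable R _ _ _ _ (1:R) dphi).
rewrite deriveE; last exact: dphi. rewrite (diff_comp dh dft) /= dhv (hg _).2.
move=> H; exact: H.
Qed.

Lemma quad_bound (f : 'rV[R]_n -> R^o) G (L : R) (hL : 0 < L) (hs : L_smooth L f G)
  x d (s sg : R) (hsg : sg = 1 \/ sg = -1) (hs0 : 0 < s) :
  sg * (f (x + s *: d) - f x - s * dotv (G x) d) <= L / 2 * (s * s) * sqnorm d.
Proof.
set c1 := dotv (G x) d; set c2 := L / 2 * sqnorm d.
pose phi : R -> R := fun r : R => f (x + r *: d).
pose psi : R -> R := sg \*: (phi - cst (f x) - c1 \*: id) - c2 \*: (id * id).
have der : forall r : R, is_derive r (1:R) psi
    (sg * (dotv (G (x + r *: d)) d - c1) - c2 * (r + r)).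
  move=> r.
  have h1 : @is_derive R R R r (1:R) phi (dotv (G (x + r *: d)) d).
    have h := @phi_derive f G hs.1 x d r; exact: h.
  have hid : @is_derive R R R r (1:R) id 1 := is_derive_id r 1.
  have hc : @is_derive R R R r (1:R) (cst (f x)) 0 := is_derive_cst _ r 1.
  have hsq := is_deriveM hid hid.
  have hl := is_deriveZ c1 hid.
  have hA := is_deriveB (is_deriveB h1 hc) hl.
  have h2 := is_deriveB (is_deriveZ sg hA) (is_deriveZ c2 hsq).
  apply: is_derive_eq h2 _.
  rewrite /= /GRing.scale /= subr0 !mulr1 //.
have psiE : forall r, psi r = sg * (f (x + r *: d) - f x - c1 * r) - c2 * (r * r) by [].
have cont : {within `[0, s], continuous psi}.
  apply: derivable_within_continuous => r _; by case: (der r).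
have [c cin hc] := MVT hs0 (fun r _ => der r) cont.
have psi0 : psi 0 = 0.
  by rewrite psiE scale0r addr0 !mulr0 !subrr mulr0 subrr.
rewrite psi0 subr0 in hc.
have c0 : 0 < c by move: cin; rewrite in_itv /= => /andP[].
have hb : sg * (dotv (G (x + c *: d)) d - c1) <= L * c * sqnorm d.
  have e : dotv (G (x + c *: d)) d - c1 = dotv (G (x + c *: d) - G x) d by rewrite dotvBl.
  rewrite e.
  have hsq : sqnorm (G (x + c *: d) - G x) <= (L * c) ^+ 2 * sqnorm d.
    have := @lip_sq L _ _ hL (hs.2 (x + c *: d) x).
    have -> : x + c *: d - x = c *: d by rewrite [x + _]addrC addrK.
    rewrite [sqnorm (c *: d)]/sqnorm dotvZl dotvZr -/(sqnorm d).
    move=> h; apply: (le_trans h); rewrite exprMn !expr2 !mulrA; lra.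
  have := @ipbound L c _ _ hL c0 hsq.
  move: (dotv _ d) => a.
  case: hsg => -> h; rewrite ?mul1r ?mulN1r; [|rewrite -normrN in h];
    exact: (le_trans (ler_norm _) h).
have : psi s <= 0.
  rewrite hc subr0; apply: mulr_le0_ge0; last exact: ltW.
  rewrite subr_le0 /c2; apply: (le_trans hb); lra.
rewrite psiE subr_le0 /c2 => h.
lra.
Qed.

End S.

Section Int.
Variables (R : realType) (d : measure_display) (I : measurableType d) (D : probability I R).

Lemma int_cst (k : R) : D.-integrable setT (EFin \o cst k) /\ Rintegral D setT (cst k) = k.
Proof.
split; first exact: finite_measure_integrable_cst.
rewrite Rintegral_cst // [fine _](_ : _ = 1) ?mulr1 //. exact: (congr1 fine (probability_setT D)).
Qed.

Lemma int_sum {J : Type} (s : seq J) (h : J -> I -> R) :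
  (forall j, D.-integrable setT (EFin \o h j)) ->
  D.-integrable setT (EFin \o (fun i => \sum_(j <- s) h j i)) /\
  Rintegral D setT (fun i => \sum_(j <- s) h j i) = \sum_(j <- s) Rintegral D setT (h j).
Proof.
move=> hi; elim: s => [|a s [ih1 ih2]].
  have -> : (fun i => \sum_(j <- [::]) h j i) = cst 0 by apply/funext => i; rewrite big_nil.
  by rewrite big_nil; apply: int_cst.
have -> : (fun i => \sum_(j <- a :: s) h j i) = (fun i => h a i + \sum_(j <- s) h j i).
  by apply/funext => i; rewrite big_cons.
split.
  apply: eq_integrable; last exact: integrableD (hi a) ih1.
  by [].
  by move=> i _.
by rewrite RintegralD // ih2 big_cons.
Qed.

Lemma intB (a b : I -> R) : D.-integrable setT (EFin \o a) -> D.-integrable setT (EFin \o b) ->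
  D.-integrable setT (EFin \o (fun i => a i - b i)).
Proof.
move=> ha hb; apply: eq_integrable; last exact: integrableB ha hb.
  by [].
by move=> i _.
Qed.

Lemma intZr (a : I -> R) (c : R) : D.-integrable setT (EFin \o a) ->
  D.-integrable setT (EFin \o (fun i => a i * c)).
Proof.
move=> ha; apply: eq_integrable; last exact: (integrableZr measurableT c ha).
  by [].
by move=> i _.
Qed.
End Int.

Lemma descent_f (R : realType) (n : nat) (d : measure_display)
  (I : measurableType d) (D : probability I R)
  (fi : I -> 'rV[R]_n -> R^o) (gradfi : I -> 'rV[R]_n -> 'rV[R]_n)
  (f : 'rV[R]_n -> R^o) (gradf : 'rV[R]_n -> 'rV[R]_n) (L : R)
  (hL : 0 < L)
  (hsmooth : forall i, L_smooth L (fi i) (gradfi i))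
  (hfint : forall x, D.-integrable setT (fun i => (fi i x)%:E))
  (hf : forall x, f x = Rintegral D setT (fun i => fi i x))
  (hgint : forall x (j : 'I_n), D.-integrable setT (fun i => (gradfi i x ord0 j)%:E))
  (hgradE : forall x, vexpect D (fun i => gradfi i x) = gradf x) x p :
  f p <= f x + dotv (gradf x) (p - x) + L / 2 * sqnorm (p - x).
Proof.
set dv := p - x.
pose h := fun i => fi i p - fi i x - \sum_(j < n) gradfi i x ord0 j * dv ord0 j.
have hb : forall i, h i <= L / 2 * sqnorm dv.
  move=> i; have := @quad_bound R n (fi i) (gradfi i) L hL (hsmooth i) x dv 1 1 (or_introl erefl) ltr01.
  by rewrite scale1r [x + _]addrC subrK !mul1r mulr1.
have ihs : forall j : 'I_n, D.-integrable setT (EFin \o (fun i => gradfi i x ord0 j * dv ord0 j)).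
  move=> j; apply: intZr; exact: hgint.
have [isum esum] := @int_sum R d I D _ (index_enum 'I_n) (fun j i => gradfi i x ord0 j * dv ord0 j) ihs.
have ih : D.-integrable setT (EFin \o h).
  apply: intB; last exact: isum.
  apply: intB; [exact: hfint | exact: hfint].
have := le_Rintegral measurableT ih (@int_cst R d I D (L / 2 * sqnorm dv)).1 (fun i _ => hb i).
rewrite (@int_cst R d I D _).2 /h.
rewrite (RintegralB measurableT _ isum); last first.
  apply: intB; [exact: hfint | exact: hfint].
rewrite (RintegralB measurableT (hfint p) (hfint x)) esum -!hf.
have -> : \sum_(j <- index_enum 'I_n) Rintegral D setT (fun i => gradfi i x ord0 j * dv ord0 j)
        = dotv (gradf x) dv.
  rewrite -hgradE /dotv; apply: eq_bigr => j _.
  rewrite /vexpect !mxE RintegralZr //; exact: (hgint x j).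
move=> H; lra.
Qed.

Lemma vec_conv (R : realType) (n : nat) (x z : 'rV[R]_n) (s : R) :
  x + s *: (z - x) = s *: z + (1 - s) *: x.
Proof. by apply/matrixP => i j; rewrite !mxE; ring. Qed.

Lemma conv_grad (R : realType) (n : nat) (f : 'rV[R]_n -> R^o) G (L : R) (hL : 0 < L)
  (hs : L_smooth L f G) (hc : convex_fun f) x z :
  dotv (G x) (z - x) <= f z - f x.
Proof.
set dv := z - x; set K := L / 2 * sqnorm dv.
have K0 : 0 <= K by apply: mulr_ge0; [lra | exact: sqnorm_ge0].
apply/ler_addgt0Pr => e he.
set s := e / (e + K).
have hs0 : 0 < s by apply: divr_gt0; lra.
have hs1 : s <= 1 by rewrite ler_pdivrMr; lra.
have hsK : s * K <= e.
  rewrite /s mulrAC ler_pdivrMr; last lra.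
  nra.
have q := @quad_bound R n f G L hL hs x dv s (-1) (or_intror erefl) hs0.
have cv := hc z x s (ltW hs0) hs1.
rewrite -vec_conv -/dv in cv.
have h : s * (dotv (G x) dv - (f z - f x) - s * K) <= 0.
  rewrite /K; nra.
have h' : dotv (G x) dv - (f z - f x) - s * K <= 0.
  by move: h; rewrite pmulr_rle0.
lra.
Qed.

Lemma prox_real (R : realType) (n : nat) (tau gz gp : R) (y p z : 'rV[R]_n)
  (g : 'rV[R]_n -> \bar R) (htau : 0 < tau) (hproper : forall x, g x != -oo%E)
  (hconv : convex_efun g) (hstep : is_prox tau g y p)
  (hz : g z = gz%:E) (hp : g p = gp%:E) :
  tau * (gp - gz) <= dotv (y - p) (p - z).
Proof.
apply/ler_addgt0Pr => e he.
set K := sqnorm (z - p) / 2.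
have K0 : 0 <= K by apply: divr_ge0; [exact: sqnorm_ge0 | lra].
set s := e / (2 * e + K).
have hs0 : 0 < s by apply: divr_gt0; lra.
have hs1 : s < 1 by rewrite ltr_pdivrMr; lra.
have hsK : s * K <= e.
  rewrite /s mulrAC ler_pdivrMr; last lra.
  nra.
have h1 := hstep (s *: z + (1 - s) *: p).
have h2 := hconv z p s hs0 hs1.
rewrite hz hp in h1 h2.
case gu: (g (s *: z + (1 - s) *: p)) => [r| |]; rewrite gu in h1 h2; last first.
- by have := hproper (s *: z + (1 - s) *: p); rewrite gu.
- by move: h2; rewrite -!EFinM -EFinD leye_eq.
rewrite -!EFinM -!EFinD lee_fin in h1.
rewrite -!EFinM -EFinD lee_fin in h2.
have h3 : tau * r <= tau * (s * gz + (1 - s) * gp) by rewrite ler_pM2l.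
have ey : y - (s *: z + (1 - s) *: p) = (y - p) - s *: (z - p).
  by apply/matrixP => i j; rewrite !mxE; ring.
rewrite ey /sqnorm !dotvE in h1.
rewrite /K /sqnorm !dotvE.
rewrite /K /sqnorm !dotvE in hsK.
have c1 := dotvC _ _ y p. have c2 := dotvC _ _ y z. have c3 := dotvC _ _ p z.
have h : s * (tau * (gp - gz) - (dotv y p - dotv y z - dotv p p + dotv p z) - s * K) <= 0.
  rewrite /K /sqnorm !dotvE. nra.
have h' : tau * (gp - gz) - (dotv y p - dotv y z - dotv p p + dotv p z) - s * K <= 0.
  by move: h; rewrite pmulr_rle0.
rewrite /K /sqnorm !dotvE in h'.
lra.
Qed.


Lemma final_alg (R : realType) (n : nat) (x p z G Gf : 'rV[R]_n) (tau eps L gz gp fa fb fx fp : R) :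
  0 < eps -> 0 < tau ->
  tau * (gp - gz) <= dotv (x - tau *: G - p) (p - z) ->
  dotv G (z - x) <= fa - fb ->
  fp <= fx + dotv Gf (p - x) + L / 2 * sqnorm (p - x) ->
  sqnorm (p - z) - sqnorm (x - z) <= 2 * tau * (fa - fb) + 2 * tau * (gz - gp)
    + (tau / eps * sqnorm (G - Gf) + 2 * tau * (fx - fp) + (tau * eps + tau * L - 1) * sqnorm (x - p)).
Proof.
move=> heps htau hA hB hC.
have hD := @young R n (x - p) (G - Gf) eps heps.
have I1 : sqnorm (p - z) - sqnorm (x - z) = - sqnorm (x - p) - 2 * dotv (x - p) (p - z).
  rewrite /sqnorm !dotvE.
  have := dotvC _ _ x p. have := dotvC _ _ x z. have := dotvC _ _ p z. move=> *; lra.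
have I2 : dotv (x - tau *: G - p) (p - z) = dotv (x - p) (p - z) - tau * dotv G (p - z).
  rewrite !dotvE; lra.
have I3 : dotv G (p - z) = - dotv G (z - x) - dotv (x - p) (G - Gf) - dotv Gf (x - p).
  rewrite !dotvE.
  have := dotvC _ _ x G. have := dotvC _ _ p G. have := dotvC _ _ x Gf. have := dotvC _ _ p Gf.
  move=> *; lra.
have I4 : dotv Gf (p - x) = - dotv Gf (x - p) by rewrite !dotvE; lra.
have I5 : sqnorm (p - x) = sqnorm (x - p).
  rewrite /sqnorm !dotvE; have := dotvC _ _ x p; move=> *; lra.
rewrite I2 I3 in hA. rewrite I4 I5 in hC. rewrite I1.
move: hA hB hC hD.
move: (dotv (x - p) (p - z)) (dotv G (z - x)) (dotv (x - p) (G - Gf)) (dotv Gf (x - p))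
  (sqnorm (x - p)) (sqnorm (G - Gf)) => A1 A2 A3 A4 S1 S2 hA hB hC hD.
have h2t : 0 < 2 * tau by apply: mulr_gt0.
have hB2 : 2 * tau * A2 <= 2 * tau * (fa - fb) by rewrite ler_pM2l.
have hC2 : 2 * tau * fp <= 2 * tau * (fx - A4 + L / 2 * S1) by rewrite ler_pM2l.
have hD2 : tau * (2 * A3) <= tau * (eps * S1 + S2 / eps) by rewrite ler_pM2l.
lra.
Qed.

Theorem lemmaA5 (R : realType) (n : nat) (d : measure_display)
  (I : measurableType d) (D : probability I R)
  (fi : I -> 'rV[R]_n -> R^o) (gradfi : I -> 'rV[R]_n -> 'rV[R]_n)
  (f : 'rV[R]_n -> R^o) (gradf : 'rV[R]_n -> 'rV[R]_n)
  (g : 'rV[R]_n -> \bar R) (L : R)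
  (hL : 0 < L)
  (hconv : forall i, convex_fun (fi i))
  (hsmooth : forall i, L_smooth L (fi i) (gradfi i))
  (hfint : forall x, D.-integrable setT (fun i => (fi i x)%:E))
  (hf : forall x, f x = Rintegral D setT (fun i => fi i x))
  (hgint : forall x (j : 'I_n), D.-integrable setT (fun i => (gradfi i x ord0 j)%:E))
  (hgradf : is_gradient f gradf)
  (hgradE : forall x, vexpect D (fun i => gradfi i x) = gradf x)
  (hgproper : proper_fun g) (hgconv : convex_efun g) (hglsc : lsc g)
  (tau : R) (htau : 0 < tau) (xt xt1 : 'rV[R]_n) (it : I)
  (hstep : is_prox tau g (xt - tau *: gradfi it xt) xt1) :
  forall (z : 'rV[R]_n) (eps : R), 0 < eps ->
    ((sqnorm (xt1 - z) - sqnorm (xt - z))%:E <=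
       (2 * tau * (fi it z - fi it xt))%:E
     + (2 * tau)%:E * (g z - g xt1)
     + (tau / eps * sqnorm (gradfi it xt - gradf xt)
        + 2 * tau * (f xt - f xt1)
        + (tau * eps + tau * L - 1) * sqnorm (xt - xt1))%:E)%E.
Proof.
move=> z eps heps.
have [gp hgp] : exists gp, g xt1 = gp%:E.
  case e1: (g xt1) => [r| |]; first by exists r.
  - exfalso; have [w hw] := hgproper.2; have := hstep w; rewrite e1.
    move: hw; case e2: (g w) => [r| |] // _.
    by rewrite gt0_muley ?lte_fin // addye //= -EFinM -EFinD leye_eq.
  - by have := hgproper.1 xt1; rewrite e1.
case ez: (g z) => [gz| |]; last first.
- by have := hgproper.1 z; rewrite ez.
- rewrite hgp addye // gt0_muley ?lte_fin ?mulr_gt0 // addey // addye //; exact: leey.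
rewrite hgp -EFinB -EFinM -!EFinD lee_fin.
have hA := @prox_real _ _ tau gz gp _ _ _ g htau hgproper.1 hgconv hstep ez hgp.
have hB := @conv_grad _ _ (fi it) (gradfi it) L hL (hsmooth it) (hconv it) xt z.
have hC := @descent_f R n d I D fi gradfi f gradf L hL hsmooth hfint hf hgint hgradE xt xt1.
exact: (@final_alg _ _ _ _ _ _ _ _ _ _ _ _ _ _ _ _ heps htau hA hB hC).
Qed.
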